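(* Let $\mu_1,\dots,\mu_d$ be Borel probability measures on $\mathbb{R}^d$ such that there exist $p_1,\dots,p_d\in(1,+\infty)$ with $\sum_i\frac1{p_i}=1$ and $\sum_i\int\frac{|x|^{p_i}}{p_i}d\mu_i(x)<+\infty$. Assume that two of the marginals are symmetric, i.e. $(-\mathrm{id})\sharp\mu_i=\mu_i$ and $(-\mathrm{id})\sharp\mu_j=\mu_j$ for two distinct indices $i\ne j$. Let $\bar\gamma$ be any maximizer of $\int\det(x_1,\dots,x_d)\,d\gamma$ over $\gamma\in\Pi(\mu_1,\dots,\mu_d)$. Then $\det(x_1,\dots,x_d)\ge0$ for $\bar\gamma$-a.e. $(x_1,\dots,x_d)$, and $\bar\gamma$ also maximizes $\int|\det(x_1,\dots,x_d)|\,d\gamma$ over $\gamma\in\Pi(\mu_1,\dots,\mu_d)$.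
   Context: $\Pi(\mu_1,\dots,\mu_d)$ is the set of Borel probability measures on $(\mathbb{R}^d)^d$ whose $i$-th marginal is $\mu_i$ for each $i$; $\sharp$ denotes push-forward. *)

(* Defs.v *)
From HB Require Import structures.
From mathcomp Require Import all_boot all_order all_algebra.
From mathcomp Require Import all_classical all_reals all_analysis.
Set Implicit Arguments. Unset Strict Implicit. Unset Printing Implicit Defensive.
Import Order.TTheory GRing.Theory Num.Theory.
Local Open Scope classical_set_scope.
Local Open Scope ring_scope.

(* R^d is modelled as d.-tuple R, with the product (= Borel) sigma-algebra
   of measurable_structure.v; (R^d)^d as d.-tuple (d.-tuple R). *)

Definition enorm (R : realType) (d : nat) (x : d.-tuple R) : R :=
  Num.sqrt (\sum_(j < d) tnth x j ^+ 2).

Definition detx (R : realType) (d : nat) (x : d.-tuple (d.-tuple R)) : R :=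
  \det (\matrix_(i < d, j < d) tnth (tnth x i) j).

Definition negt (R : realType) (d : nat) (x : d.-tuple R) : d.-tuple R :=
  map_tuple (fun t => - t) x.

Definition symmetric_measure (R : realType) (d : nat)
    (mu : probability (d.-tuple R) R) : Prop :=
  forall A : set (d.-tuple R), measurable A ->
    mu (@negt R d @^-1` A) = mu A.

Definition coupling (R : realType) (d : nat)
    (mu : 'I_d -> probability (d.-tuple R) R)
    (gamma : probability (d.-tuple (d.-tuple R)) R) : Prop :=
  forall (i : 'I_d) (A : set (d.-tuple R)), measurable A ->
    gamma ((fun x : d.-tuple (d.-tuple R) => tnth x i) @^-1` A) = mu i A.

(* Main.v *)
Require Import Defs.
From HB Require Import structures.
From mathcomp Require Import all_boot all_order all_algebra.
From mathcomp Require Import all_classical all_reals all_analysis.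
Import Order.TTheory GRing.Theory Num.Theory.
Local Open Scope classical_set_scope.
Local Open Scope ring_scope.
From mathcomp Require Import ring lra measurable_realfun perm.
Set Implicit Arguments. Unset Strict Implicit. Unset Printing Implicit Defensive.

Section pushf.
Local Open Scope ereal_scope.
Context d d' (T : measurableType d) (T' : measurableType d') (R : realType).
Variables (P : {measure set T -> \bar R}) (f : T -> T').
Hypothesis mf : measurable_fun [set: T] f.

Definition pushf (mf' : measurable_fun [set: T] f) (A : set T') := P (f @^-1` A).

Let pushf0 : pushf mf set0 = 0.
Proof. by rewrite /pushf preimage_set0 measure0. Qed.

Let pushf_ge0 A : 0 <= pushf mf A.
Proof. exact: measure_ge0. Qed.

Let pushf_sigma_additive : semi_sigma_additive (pushf mf).
Proof.
move=> F mF tF mUF; rewrite /pushf preimage_bigcup.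
apply: measure_semi_sigma_additive.
- by move=> n; rewrite -[X in measurable X]setTI; exact: mf.
- apply/trivIsetP => /= i j _ _ ij; rewrite -preimage_setI.
  by move/trivIsetP : tF => /(_ _ _ _ _ ij) ->//; rewrite preimage_set0.
- by rewrite -preimage_bigcup -[X in measurable X]setTI; exact: mf.
Qed.

HB.instance Definition _ := isMeasure.Build _ _ _
  (pushf mf) pushf0 pushf_ge0 pushf_sigma_additive.
End pushf.

Definition half (R : realType) : {nonneg R} := ((2:R)^-1)%:nng.

Section mix.
Local Open Scope ereal_scope.
Context d (T : measurableType d) (R : realType).
Variables (P : probability T R) (f g : T -> T).
Hypotheses (mf : measurable_fun [set: T] f) (mg : measurable_fun [set: T] g).


Definition mix := measure_add (mscale (half R) (pushf P mf)) (mscale (half R) (pushf P mg)).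

Lemma half_half (x : \bar R) : 0 <= x -> ((2:R)^-1)%R%:E * x + ((2:R)^-1)%R%:E * x = x.
Proof.
case: x => [r||] //= _; last by rewrite gt0_muley ?lte_fin ?invr_gt0.
by rewrite -EFinM -EFinD; congr EFin; field.
Qed.

Lemma mixE A : mix A = ((2:R)^-1)%R%:E * (P (f @^-1` A) + P (g @^-1` A)).
Proof.
rewrite /mix measure_addE /mscale /pushf /=.
rewrite muleDr //; rewrite ge0_adde_def // inE ?measure_ge0 //.
Qed.

Let mix1 : mix [set: T] = 1.
Proof. by rewrite mixE !preimage_setT probability_setT -EFinD -EFinM; congr EFin; field. Qed.

HB.instance Definition _ := Measure.on mix.
HB.instance Definition _ := Measure_isProbability.Build _ _ _ mix mix1.

Lemma integral_mix (h : T -> \bar R) : measurable_fun [set: T] h ->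
  (forall x, 0 <= h x) ->
  \int[mix]_x h x = ((2:R)^-1)%R%:E * \int[P]_x h (f x) + ((2:R)^-1)%R%:E * \int[P]_x h (g x).
Proof.
move=> mh h0.
rewrite ge0_integral_measure_add//.
rewrite !ge0_integral_mscale//.
have -> : \int[pushf P mf]_x h x = \int[P]_x h (f x).
  by rewrite (ge0_integral_pushforward mf)// preimage_setT.
have -> : \int[pushf P mg]_x h x = \int[P]_x h (g x).
  by rewrite (ge0_integral_pushforward mg)// preimage_setT.
by [].
Qed.
End mix.


Section meas.
Variables (R : realType) (d : nat).

Lemma measurable_detx : measurable_fun [set: d.-tuple (d.-tuple R)] (@detx R d).
Proof.
rewrite /detx /determinant.
have -> : (fun x : d.-tuple (d.-tuple R) => \det (\matrix_(i < d, j < d) tnth (tnth x i) j)) =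
  (fun x => \sum_(s : 'S_d) (-1) ^+ s * \prod_i tnth (tnth x i) (s i)).
  apply/funext => x; rewrite /determinant; apply: eq_bigr => s _; congr (_ * _).
  by apply: eq_bigr => k _; rewrite mxE.
apply: measurable_sum => s; apply: measurable_funM; first exact: measurable_cst.
apply: measurable_prod => k _.
apply: (measurableT_comp (measurable_tnth _)).
exact: measurable_tnth.
Qed.

Lemma measurable_negt : measurable_fun [set: d.-tuple R] (@negt R d).
Proof.
apply/measurable_fun_tnthP => k.
have -> : ((fun y => tnth y k) \o @negt R d) = (fun x => - tnth x k).
  by apply/funext => x /=; rewrite /negt tnth_map.
apply: measurable_funN; exact: measurable_tnth.
Qed.

Lemma enormE (x : d.-tuple R) : enorm x = (\sum_(j < d) tnth x j ^+ 2) `^ (2^-1).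
Proof. by rewrite powR12_sqrt // sumr_ge0 // => j _; rewrite sqr_ge0. Qed.

Lemma measurable_gp (q : R) :
  measurable_fun [set: d.-tuple R] (fun x => enorm x `^ q / q).
Proof.
apply: measurable_funM; last exact: measurable_cst.
apply: (@measurableT_comp _ _ _ _ _ _ (fun t : R => t `^ _)); first exact: measurable_powR.
have -> : (@enorm R d) = (fun x => (\sum_(j < d) tnth x j ^+ 2) `^ (2^-1)).
  by apply/funext => x; rewrite enormE.
apply: (@measurableT_comp _ _ _ _ _ _ (fun t : R => t `^ _)); first exact: measurable_powR.
apply: measurable_sum => j; apply: measurable_funX; exact: measurable_tnth.
Qed.

End meas.


Section flip.
Variables (R : realType) (d : nat) (i j : 'I_d).
Hypothesis hij : i != j.

Definition sgn (b : bool) : R := if b then 1 else -1.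

Definition sv (e : bool) (x : d.-tuple (d.-tuple R)) (k : 'I_d) : R :=
  if k == i then sgn e else if k == j then sgn e * sgn (0 <= detx x) else 1.

Definition flip (e : bool) (x : d.-tuple (d.-tuple R)) : d.-tuple (d.-tuple R) :=
  [tuple map_tuple (fun t => sv e x k * t) (tnth x k) | k < d].

Lemma tnth_flip e x k : tnth (flip e x) k = map_tuple (fun t => sv e x k * t) (tnth x k).
Proof. by rewrite tnth_mktuple. Qed.

Lemma det_flip e x : detx (flip e x) = `|detx x|.
Proof.
rewrite /detx.
have -> : (\matrix_(k < d, l < d) tnth (tnth (flip e x) k) l) =
   diag_mx (\row_k sv e x k) *m (\matrix_(k < d, l < d) tnth (tnth x k) l).
  apply/matrixP => k l; rewrite mul_diag_mx !mxE tnth_flip tnth_map.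
  done.
rewrite det_mulmx det_diag (bigD1 i) //=. rewrite (bigD1 j) //=; last by rewrite eq_sym. rewrite big1; last first.
  by move=> k /andP[ki kj]; rewrite mxE /sv (negbTE ki) (negbTE kj).
rewrite !mxE /sv eqxx eq_sym (negbTE hij) eqxx mulr1.
set D := \det _.
case: e; case: (lerP 0 D) => hD /=; rewrite /sgn.
- by rewrite ger0_norm //; ring.
- by rewrite ltr0_norm //; ring.
- by rewrite ger0_norm //; ring.
- by rewrite ltr0_norm //; ring.
Qed.

Lemma measurable_sgn_det :
  measurable_fun [set: d.-tuple (d.-tuple R)] (fun x => sgn (0 <= detx x)).
Proof.
apply: measurable_fun_ifT; [|exact: measurable_cst|exact: measurable_cst].
apply: measurable_fun_ler; [exact: measurable_cst|exact: measurable_detx].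
Qed.

Lemma measurable_flip e : measurable_fun [set: d.-tuple (d.-tuple R)] (flip e).
Proof.
apply/measurable_fun_tnthP => k.
apply/measurable_fun_tnthP => l.
apply: (eq_measurable_fun (fun x => sv e x k * tnth (tnth x k) l)).
  by move=> x _ /=; rewrite tnth_flip tnth_map.
apply: measurable_funM; last first.
  apply: (measurableT_comp (measurable_tnth _)); exact: measurable_tnth.
rewrite /sv; case: (k == i); first exact: measurable_cst.
case: (k == j); last exact: measurable_cst.
apply: measurable_funM; first exact: measurable_cst.
exact: measurable_sgn_det.
Qed.

End flip.


Lemma half_double (R : realType) (z : \bar R) : (0 <= z)%E ->
  (((2:R)^-1)%:E * (z + z) = z)%E.
Proof.
case: z => [r||] //= _.
  by rewrite -EFinD -EFinM; congr EFin; field.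
by rewrite gt0_muley ?lte_fin ?invr_gt0.
Qed.

Lemma map1 (R : realType) (d : nat) (y : d.-tuple R) : map_tuple (fun t => 1 * t) y = y.
Proof. by apply: val_inj => /=; rewrite (eq_map (g := id)) ?map_id // => t; rewrite mul1r. Qed.

Lemma mapm1 (R : realType) (d : nat) (y : d.-tuple R) : map_tuple (fun t => -1 * t) y = negt y.
Proof. by apply: val_inj => /=; apply: eq_map => t; rewrite mulN1r. Qed.

Section coupling_mix.
Variables (R : realType) (d : nat) (mu : 'I_d -> probability (d.-tuple R) R).
Variables (i j : 'I_d) (hij : i != j).
Hypotheses (hsi : symmetric_measure (mu i)) (hsj : symmetric_measure (mu j)).
Variables (gam : probability (d.-tuple (d.-tuple R)) R) (hg : coupling mu gam).

Local Notation T := (d.-tuple (d.-tuple R)).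

Definition gflip := mix gam (measurable_flip i j true) (measurable_flip i j false).

Lemma preimage_flip e k (A : set (d.-tuple R)) :
  flip i j e @^-1` ((fun x => tnth x k) @^-1` A) =
  [set x | A (map_tuple (fun t => sv i j e x k * t) (tnth x k))].
Proof. by apply/seteqP; split => x /=; rewrite tnth_flip. Qed.

Lemma mproj k (A : set (d.-tuple R)) : measurable A ->
  measurable ((fun x : T => tnth x k) @^-1` A).
Proof. by move=> mA; rewrite -[X in measurable X]setTI; exact: measurable_tnth. Qed.

Lemma mnegt (A : set (d.-tuple R)) : measurable A -> measurable (@negt R d @^-1` A).
Proof. by move=> mA; rewrite -[X in measurable X]setTI; exact: measurable_negt. Qed.

Lemma coupling_gflip : coupling mu gflip.
Proof.
move=> k A mA; rewrite /gflip; etransitivity; first exact: mixE.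
rewrite !preimage_flip.
have mS : forall e, measurable [set x : T | A (map_tuple (fun t => sv i j e x k * t) (tnth x k))].
  move=> e; rewrite -preimage_flip -[X in measurable X]setTI.
  by apply: measurable_flip => //; exact: mproj.
have hN : forall l, symmetric_measure (mu l) ->
    gam ((fun x : T => tnth x l) @^-1` (@negt R d @^-1` A)) = mu l A.
  by move=> l hl; rewrite hg ?hl //; exact: mnegt.
have [ki|ki] := eqVneq k i.
  subst k.
  rewrite /sv eqxx /sgn.
  have -> : [set x : T | A (map_tuple (fun t => 1 * t) (tnth x i))] =
            (fun x : T => tnth x i) @^-1` A.
    by apply/seteqP; split => x /=; rewrite map1.
  have -> : [set x : T | A (map_tuple (fun t => -1 * t) (tnth x i))] =
            (fun x : T => tnth x i) @^-1` (@negt R d @^-1` A).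
    by apply/seteqP; split => x /=; rewrite mapm1.
  by rewrite hg // hN // half_double.
have [kj|kj] := eqVneq k j.
  subst k.
  have hji : (j == i) = false by rewrite eq_sym (negbTE hij).
  rewrite /sv hji eqxx /sgn.
  set B := [set x : T | 0 <= detx x].
  have mB : measurable B.
    have -> : B = (@detx R d) @^-1` `[0, +oo[%classic.
      by apply/seteqP; split => x /=; rewrite in_itv /= andbT.
    by rewrite -[X in measurable X]setTI; apply: measurable_detx => //; exact: measurable_itv.
  set P := (fun x : T => tnth x j) @^-1` A.
  set N := (fun x : T => tnth x j) @^-1` (@negt R d @^-1` A).
  set S1 := [set x : T | _].
  set S2 := [set x : T | _].
  have mP : measurable P by exact: mproj.
  have mN : measurable N by apply: mproj; exact: mnegt.
  have mS1 : measurable S1.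
    by have := mS true; rewrite /sv hji eqxx /sgn.
  have mS2 : measurable S2.
    by have := mS false; rewrite /sv hji eqxx /sgn.
  have E1 : S1 `&` B = P `&` B.
    apply/seteqP; split => x [h1 h2]; split => //; move: h1; rewrite /B /= in h2;
    by rewrite /S1 /P /= h2 !mul1r map1.
  have E2 : S1 `\` B = N `\` B.
    apply/seteqP; split => x [h1 h2]; split => //; move: h1; rewrite /B /= in h2;
    by move/negP: h2 => /negbTE h2; rewrite /S1 /N /= h2 mul1r mapm1.
  have E3 : S2 `&` B = N `&` B.
    apply/seteqP; split => x [h1 h2]; split => //; move: h1; rewrite /B /= in h2;
    by rewrite /S2 /N /= h2 mulr1 mapm1.
  have E4 : S2 `\` B = P `\` B.
    apply/seteqP; split => x [h1 h2]; split => //; move: h1; rewrite /B /= in h2;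
    by move/negP: h2 => /negbTE h2; rewrite /S2 /P /= h2 mulrNN mulr1 map1.
  rewrite (measureDI gam mS1 mB) (measureDI gam mS2 mB) E1 E2 E3 E4.
  have -> : (gam (N `\` B) + gam (P `&` B) + (gam (P `\` B) + gam (N `&` B)) =
            gam P + gam N)%E.
    rewrite (measureDI gam mP mB) (measureDI gam mN mB).
    rewrite addeACA [X in (X + _)%E]addeC.
    by rewrite addeACA.
  by rewrite hg // hN // half_double.
rewrite /sv (negbTE ki) (negbTE kj).
have -> : [set x : T | A (map_tuple (fun t => 1 * t) (tnth x k))] =
          (fun x : T => tnth x k) @^-1` A.
  by apply/seteqP; split => x /=; rewrite map1.
by rewrite hg // half_double.
Qed.

End coupling_mix.

Section int_gflip.
Variables (R : realType) (d : nat) (i j : 'I_d) (hij : i != j).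
Variables (gam : probability (d.-tuple (d.-tuple R)) R).
Local Open Scope ereal_scope.

Lemma measurable_Edet : measurable_fun [set: d.-tuple (d.-tuple R)] (fun x => (@detx R d x)%:E).
Proof. by apply/measurable_EFinP; exact: measurable_detx. Qed.

Lemma int_gflip :
  \int[mix gam (measurable_flip i j true) (measurable_flip i j false)]_x (detx x)%:E =
  \int[gam]_x `|detx x|%:E.
Proof.
rewrite integralE.
rewrite !integral_mix //; last 2 first.
- by apply: measurable_funeneg; exact: measurable_Edet.
- by apply: measurable_funepos; exact: measurable_Edet.
have Ep e : \int[gam]_x (fun x0 => (@detx R d x0)%:E)^\+ (flip i j e x) = \int[gam]_x `|detx x|%:E.
  apply: eq_integral => x _; rewrite funeposE det_flip //=.
  by rewrite max_l // lee_fin.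
have En e : \int[gam]_x (fun x0 => (@detx R d x0)%:E)^\- (flip i j e x) = 0.
  rewrite -(integral0 gam setT); apply: eq_integral => x _; rewrite funenegE det_flip //=.
  by rewrite max_r // lee_fin oppr_le0.
rewrite !Ep !En.
rewrite mule0 adde0 sube0.
rewrite -muleDr //; last by rewrite ge0_adde_def // inE integral_ge0 // => x _; rewrite lee_fin.
by rewrite half_double // integral_ge0 // => x _; rewrite lee_fin.
Qed.

End int_gflip.


Section amgm.
Variable R : realType.

Lemma two_amgm (x y a b : R) : 0 <= x -> 0 <= y -> 0 < a -> 0 < b -> a + b = 1 ->
  x `^ a * y `^ b <= a * x + b * y.
Proof.
move=> x0 y0 a0 b0 ab.
have := @conjugate_powR R (x `^ a) (y `^ b) a^-1 b^-1 (powR_ge0 _ _) (powR_ge0 _ _).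
rewrite !invr_gt0 => /(_ a0 b0); rewrite !invrK => /(_ ab).
rewrite -!powRrM !divff ?gt_eqF // !powRr1 //.
by rewrite [x * a]mulrC [y * b]mulrC.
Qed.

Lemma prod_powR (I : Type) (s : seq I) (P : pred I) (c : I -> R) (r : R) :
  (forall k, 0 <= c k) ->
  (\prod_(k <- s | P k) c k) `^ r = \prod_(k <- s | P k) (c k `^ r).
Proof.
move=> c0.
pose K := fun y1 y2 : R => 0 <= y1 /\ y1 `^ r = y2.
suff [] : K (\prod_(k <- s | P k) c k) (\prod_(k <- s | P k) (c k `^ r)) by [].
apply: (big_rec2 K).
  by split => //; rewrite powR1.
move=> k y1 y2 _ [h1 h2]; split; first by rewrite mulr_ge0.
by rewrite powRM // h2.
Qed.

Lemma amgm n (b w : 'I_n -> R) : (forall k, 0 <= b k) -> (forall k, 0 < w k) ->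
  \sum_k w k = 1 -> \prod_k b k `^ w k <= \sum_k w k * b k.
Proof.
elim: n b w => [|n IH] b w hb hw hs.
  by move: hs; rewrite big_ord0 => /eqP; rewrite eq_sym oner_eq0.
rewrite big_ord_recl [X in _ <= X]big_ord_recl.
rewrite big_ord_recl in hs.
case: n IH b w hb hw hs => [|n] IH b w hb hw hs.
  move: hs; rewrite !big_ord0 addr0 => ->.
  by rewrite powRr1 // mulr1 mul1r addr0.
set W := \sum_(k < n.+1) w (lift ord0 k).
have W0 : 0 < W.
  rewrite /W (bigD1 ord0) //=; apply: (lt_le_trans (hw (lift ord0 ord0))).
  by rewrite lerDl sumr_ge0 // => k _; exact: ltW.
pose w' k := w (lift ord0 k) / W.
pose b' k := b (lift ord0 k).
have hs' : \sum_k w' k = 1.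
  by rewrite /w' -mulr_suml divff // gt_eqF.
have := IH b' w' (fun k => hb _) (fun k => divr_gt0 (hw _) W0) hs'.
set G := \prod_k b' k `^ w' k.
move=> hG.
have G0 : 0 <= G by rewrite /G prodr_ge0 // => k _; exact: powR_ge0.
have -> : \prod_(i < n.+1) b (lift ord0 i) `^ w (lift ord0 i) = G `^ W.
  rewrite /G prod_powR; last by move=> k; exact: powR_ge0.
  apply: eq_bigr => k _; rewrite -powRrM /w' mulrVK //.
  by rewrite unitfE gt_eqF.
apply: (le_trans (two_amgm (hb _) G0 (hw _) W0 _)); first by rewrite /W -hs.
rewrite lerD2l.
apply: (le_trans (ler_wpM2l (ltW W0) hG)).
rewrite mulr_sumr; apply: ler_sum => k _.
rewrite /w' /b' mulrA mulrCA mulfV ?gt_eqF // mulr1.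
done.
Qed.

Lemma young_n n (a p : 'I_n -> R) : (forall k, 0 <= a k) -> (forall k, 0 < p k) ->
  \sum_k (p k)^-1 = 1 -> \prod_k a k <= \sum_k a k `^ p k / p k.
Proof.
move=> ha hp hs.
have := @amgm n (fun k => a k `^ p k) (fun k => (p k)^-1) (fun k => powR_ge0 _ _)
  (fun k => (eqbRL (invr_gt0 _) (hp k))) hs.
have -> : \prod_k (a k `^ p k) `^ (p k)^-1 = \prod_k a k.
  apply: eq_bigr => k _; rewrite -powRrM divff ?gt_eqF // powRr1 //.
move=> h; apply: (le_trans h); rewrite le_eqVlt; apply/orP; left; apply/eqP.
by apply: eq_bigr => k _; rewrite mulrC.
Qed.

End amgm.


Section bound.
Variables (R : realType) (d : nat).

Lemma enorm_ge0 (x : d.-tuple R) : 0 <= enorm x.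
Proof. exact: sqrtr_ge0. Qed.

Lemma abs_entry (x : d.-tuple R) l : `|tnth x l| <= enorm x.
Proof.
rewrite -sqrtr_sqr /enorm ler_sqrt; last by rewrite sumr_ge0 // => j _; rewrite sqr_ge0.
by rewrite (bigD1 l) //= lerDl sumr_ge0 // => j _; rewrite sqr_ge0.
Qed.

Lemma det_bound (x : d.-tuple (d.-tuple R)) :
  `|detx x| <= (\prod_k enorm (tnth x k)) *+ #|{perm 'I_d}|.
Proof.
rewrite /detx /determinant.
apply: (le_trans (ler_norm_sum _ _ _)).
rewrite -sumr_const; apply: ler_sum => s _.
rewrite normrM normrX normrN1 expr1n mul1r normr_prod.
apply: ler_prod => k _; rewrite normr_ge0 /= mxE.
exact: abs_entry.
Qed.

Lemma det_bound2 (p : 'I_d -> R) (hp : forall k, 0 < p k)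
  (hs : \sum_k (p k)^-1 = 1) (x : d.-tuple (d.-tuple R)) :
  `|detx x| <= #|{perm 'I_d}|%:R * \sum_k (enorm (tnth x k) `^ p k / p k).
Proof.
apply: (le_trans (det_bound x)); rewrite -mulr_natl.
apply: ler_wpM2l; first exact: ler0n.
apply: young_n => // k; exact: enorm_ge0.
Qed.

End bound.


Lemma abs_det_fin (R : realType) (d : nat)
    (mu : 'I_d -> probability (d.-tuple R) R)
    (p : 'I_d -> R)
    (hp1 : forall i, 1 < p i)
    (hpsum : \sum_(i < d) (p i)^-1 = 1)
    (hmom : (\sum_(i < d) \int[mu i]_x ((enorm x `^ p i) / p i)%:E < +oo)%E)
    (gbar : probability (d.-tuple (d.-tuple R)) R)
    (hgbar : coupling mu gbar) :
  (\int[gbar]_x `|detx x|%:E < +oo)%E.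
Proof.
have hp : forall k, 0 < p k by move=> k; exact: lt_trans ltr01 (hp1 k).
set N : R := #|{perm 'I_d}|%:R.
pose g k (y : d.-tuple R) := enorm y `^ p k / p k.
have g0 : forall k y, 0 <= g k y.
  by move=> k y; rewrite /g divr_ge0 ?powR_ge0 // ltW.
have mg : forall k, measurable_fun [set: d.-tuple R] (g k).
  by move=> k; exact: measurable_gp.
have mgk : forall k, measurable_fun [set: d.-tuple (d.-tuple R)] (fun x => g k (tnth x k)).
  by move=> k; apply: measurableT_comp; [exact: mg|exact: measurable_tnth].
have step2 : forall k, (\int[gbar]_x (g k (tnth x k))%:E = \int[mu k]_y (g k y)%:E)%E.
  move=> k.
  have mp := @measurable_tnth _ (d.-tuple R) d k.
  transitivity (\int[pushf gbar mp]_y (g k y)%:E)%E.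
    rewrite /pushf (ge0_integral_pushforward mp) //; last first.
    - by move=> y _; rewrite lee_fin.
    - by apply/measurable_EFinP; exact: mg.
  apply: eq_measure_integral => A mA _.
  by rewrite /pushf; exact: hgbar.
have H : (\int[gbar]_x `|detx x|%:E <= \int[gbar]_x (N * \sum_k g k (tnth x k))%:E)%E.
  apply: ge0_le_integral => //.
  - apply/measurable_EFinP; apply: measurableT_comp; first exact: normr_measurable.
    exact: measurable_detx.
  - apply/measurable_EFinP; apply: measurable_funM; first exact: measurable_cst.
    by apply: measurable_sum => k; exact: mgk.
  - move=> x _; rewrite lee_fin.
    exact: det_bound2.
apply: (le_lt_trans H).
under eq_integral do rewrite EFinM.
rewrite ge0_integralZl //; last 2 first.
- by move=> x _; rewrite lee_fin sumr_ge0.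
- by rewrite lee_fin /N ler0n.
apply: lte_mul_pinfty => //; first by rewrite lee_fin /N ler0n.
under eq_integral do rewrite -sumEFin.
rewrite ge0_integral_sum //; last 2 first.
- by move=> k; apply/measurable_EFinP; exact: mgk.
- by move=> k x _; rewrite lee_fin.
under eq_bigr do rewrite step2.
  exact: hmom.
by apply/measurable_EFinP; apply: measurable_sum => k; exact: mgk.
Qed.


Unset Implicit Arguments. Set Strict Implicit. Set Printing Implicit Defensive.

Theorem proposition5p1 (R : realType) (d : nat)
    (mu : 'I_d -> probability (d.-tuple R) R)
    (p : 'I_d -> R)
    (hp1 : forall i, 1 < p i)
    (hpsum : \sum_(i < d) (p i)^-1 = 1)
    (hmom : (\sum_(i < d) \int[mu i]_x ((enorm x `^ p i) / p i)%:E < +oo)%E)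
    (i j : 'I_d) (hij : i != j)
    (hsi : symmetric_measure (mu i)) (hsj : symmetric_measure (mu j))
    (gbar : probability (d.-tuple (d.-tuple R)) R)
    (hgbar : coupling mu gbar)
    (hmax : forall gamma : probability (d.-tuple (d.-tuple R)) R,
        coupling mu gamma ->
        (\int[gamma]_x (detx x)%:E <= \int[gbar]_x (detx x)%:E)%E) :
  {ae gbar, forall x, 0 <= detx x} /\
  (forall gamma : probability (d.-tuple (d.-tuple R)) R,
      coupling mu gamma ->
      (\int[gamma]_x `|detx x|%:E <= \int[gbar]_x `|detx x|%:E)%E).
Proof.
have K : forall gamma : probability (d.-tuple (d.-tuple R)) R, coupling mu gamma ->
    (\int[gamma]_x `|detx x|%:E <= \int[gbar]_x (detx x)%:E)%E.
  move=> gamma hgam; rewrite -(int_gflip hij gamma).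
  by apply: hmax; exact: (coupling_gflip hij hsi hsj hgam).
have mE := @measurable_Edet R d.
split; last first.
  move=> gamma hgam; apply: (le_trans (K _ hgam)).
  apply: (le_trans (lee_abs _)).
  exact: le_abse_integral.
have := K _ hgbar.
set f := (fun x : d.-tuple (d.-tuple R) => (detx x)%:E).
have fin := abs_det_fin hp1 hpsum hmom hgbar.
have eabs : (\int[gbar]_x `|detx x|%:E = \int[gbar]_x f^\+ x + \int[gbar]_x f^\- x)%E.
  rewrite -ge0_integralD //; last 2 first.
  - exact: measurable_funepos.
  - exact: measurable_funeneg.
  apply: eq_integral => x _.
  by rewrite -[LHS]/((abse \o f) x) fune_abse.
rewrite eabs [X in (_ <= X)%E]integralE.
set a := (\int[gbar]_x f^\+ x)%E.
set b := (\int[gbar]_x f^\- x)%E.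
have a0 : (0 <= a)%E by apply: integral_ge0 => x _; exact: funepos_ge0.
have b0 : (0 <= b)%E by apply: integral_ge0 => x _; exact: funeneg_ge0.
have afin : a \is a fin_num.
  rewrite ge0_fin_numE //; apply: le_lt_trans fin.
  by rewrite eabs leeDl.
move=> hab.
have b00 : b = 0%E.
  move: hab b0; rewrite -(fineK afin).
  case: b => [r||] //=.
  rewrite -!EFinD !lee_fin => h1 h2; congr EFin; lra.
have := @ae_eq_integral_abs _ _ _ gbar setT measurableT (funeneg f) (measurable_funeneg mE).
case=> + _.
have -> : (\int[gbar]_x `|f^\- x| = b)%E.
  by apply: eq_integral => x _; rewrite gee0_abs // funeneg_ge0.
move=> /(_ b00) hae.
apply: filterS hae => x /(_ I) /=.
rewrite funenegE /f => /max_idPr.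
by rewrite lee_fin oppr_le0.
Qed.
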